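(* Let $0<k<n$ and let $\omega=(c_1,\dots,c_n)\in\{0,1\}^n$ with exactly $k$ ones, viewed as a weight in the Weyl orbit $W\omega_k$. Let $l_1<l_2<\dots<l_q$ be the indices $j\in\{1,\dots,n-1\}$ with $c_j-c_{j+1}=-1$ and $r_1<r_2<\dots<r_p$ the indices $j\in\{1,\dots,n-1\}$ with $c_j-c_{j+1}=1$ (so $\omega=\sum_i\omega_{r_i}-\sum_i\omega_{l_i}$, and the two sequences interlace). Assume $r_1<l_1<r_2<l_2<\cdots$ (so $q\in\{p-1,p\}$). Define integers recursively by $f(r_1)=r_1$, $f(l_i)=l_i-f(r_i)$, $f(r_{i+1})=r_{i+1}-f(l_i)$. Then: (1) $0<f(r_i)\le r_i$ and $0<f(l_i)<l_i$ for all $i$; in particular all these labels lie in $\{1,\dots,n-1\}$. (2) Let $D$ be the directed labelled graph with vertices $A,R_1,\dots,R_p,L_1,\dots,L_q$ and edges $A\to R_1$ labelled $r_1$, $R_i\to R_{i+1}$ labelled $r_{i+1}$, $A\to L_1$ labelled $l_1$, $L_i\to L_{i+1}$ labelled $l_{i+1}$, $R_i\to L_i$ labelled $f(l_i)$ ($1\le i\le q$), and $L_i\to R_{i+1}$ labelled $f(r_{i+1})$ ($1\le i\le p-1$). Then the paths $A,R_1,\dots,R_p$ and $A,L_1,\dots,L_q$ are geodesics (of lengths $\sum_i\omega_{r_i}$ and $\sum_i\omega_{l_i}$ respectively), and $D$ has coherent geodesics at $A$ (every pair $(A,v)$ has coherent geodesics). The same conclusions hold in the case $l_1<r_1<l_2<r_2<\cdots$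 for the graph obtained by the same rules with the roles of $(l_i,L_i)$ and $(r_i,R_i)$ interchanged.
   Context: Weights of $\mathrm{SL}_n$ are identified with $\mathbb{Z}^n/\mathbb{Z}(1,\dots,1)$; $\omega_i=e_1+\dots+e_i$, with $\omega_0=0$ and indices mod $n$; the Weyl group $W=S_n$ permutes coordinates; weights are partially ordered by $\mu\le\nu$ iff $\nu-\mu$ is a nonnegative integer combination of positive roots. In a directed graph with edges labelled by $\{0,\dots,n-1\}$, a path may traverse edges in either direction; its length is the sum over its edges of $\omega_a$ (edge labelled $a$ traversed along its direction) or $\omega_{n-a}$ (traversed against it). A geodesic between two vertices is a path between them of minimal length (no path between them has strictly smaller length); a pair $(a,b)$ has coherent geodesics if all geodesics between $a$ and $b$ have the same length. (The graph $D$ is the dual graph of the length-one ''triangular diagram'' web $T_\omega$ with vertex $A$.) *)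

(* Defs.v *)
From HB Require Import structures.
From mathcomp Require Import all_boot all_order all_algebra.
Set Implicit Arguments. Unset Strict Implicit. Unset Printing Implicit Defensive.
Import Order.TTheory GRing.Theory Num.Theory.
Local Open Scope ring_scope.

(* A weight is represented by a vector of Z^n, i.e. a function 'I_n -> int;
   coordinate i (0-based) is the coefficient of e_(i+1).  Weights are taken
   modulo Z(1,...,1): see [wcong]. *)
Definition wt (n : nat) := {ffun 'I_n -> int}.

Definition wcong n (x y : wt n) : Prop := exists z : int, x = y + [ffun=> z].

(* omega_a = e_1 + ... + e_a, index a taken mod n (omega_0 = 0) *)
Definition omega n (a : int) : wt n :=
  [ffun i : 'I_n => (((i%:Z < (a %% n%:Z)%Z)%R : bool) : nat)%:Z].

Definition proot n (i j : 'I_n) : wt n :=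
  [ffun k => (((k == i) : bool) : nat)%:Z - (((k == j) : bool) : nat)%:Z].

Definition wle n (mu nu : wt n) : Prop :=
  exists a : 'I_n -> 'I_n -> nat,
    wcong (nu - mu) (\sum_(i < n) \sum_(j < n | (i < j)%N) proot i j *+ a i j).

Definition wlt n (mu nu : wt n) : Prop := wle mu nu /\ ~ wcong mu nu.

Inductive vtx := VA | VR of nat | VL of nat.

Definition vtx_code (v : vtx) : option (bool * nat) :=
  match v with VA => None | VR i => Some (true, i) | VL i => Some (false, i) end.
Definition vtx_decode (o : option (bool * nat)) : vtx :=
  match o with None => VA | Some (true, i) => VR i | Some (false, i) => VL i end.
Lemma vtx_codeK : cancel vtx_code vtx_decode. Proof. by case. Qed.
HB.instance Definition _ := Equality.copy vtx (can_type vtx_codeK).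

(* an edge (src, dst, label) *)
Definition edge := (vtx * vtx * int)%type.
(* a step of a path: an edge, and whether it is traversed along (true)
   or against (false) its direction *)
Definition step := (edge * bool)%type.

Fixpoint walk (E : seq edge) (u : vtx) (s : seq step) (v : vtx) : bool :=
  match s with
  | [::] => u == v
  | (e, d) :: s' =>
      (e \in E) &&
      (if d then (e.1.1 == u) && walk E e.1.2 s' v
            else (e.1.2 == u) && walk E e.1.1 s' v)
  end.

Definition plen n (s : seq step) : wt n :=
  \sum_(st <- s) (if st.2 then omega n st.1.2 else omega n (n%:Z - st.1.2)).

Definition geodesic n (E : seq edge) (u v : vtx) (s : seq step) : Prop :=
  walk E u s v /\ ~ (exists s', walk E u s' v /\ wlt (plen n s') (plen n s)).

Definition coherent n (E : seq edge) (u v : vtx) : Prop :=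
  forall s1 s2, geodesic n E u v s1 -> geodesic n E u v s2 ->
    wcong (plen n s1) (plen n s2).

(* c_j for j = 1..n (1-based) *)
Definition cj (c : seq bool) (j : nat) : int := ((nth false c j.-1 : bool) : nat)%:Z.

Definition rs (n : nat) (c : seq bool) : seq nat :=
  [seq j <- iota 1 n.-1 | cj c j - cj c j.+1 == 1].
Definition ls (n : nat) (c : seq bool) : seq nat :=
  [seq j <- iota 1 n.-1 | cj c j - cj c j.+1 == -1].

(* 1-based access x_i *)
Definition at1 (xs : seq nat) (i : nat) : nat := nth 0%N xs i.-1.

Fixpoint alt (xs ys : seq nat) : seq nat :=
  match xs, ys with
  | x :: xs', y :: ys' => x :: y :: alt xs' ys'
  | _, _ => xs ++ ys
  end.

Definition interlaced (xs ys : seq nat) : bool :=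
  sorted ltn (alt xs ys) && (size ys <= size xs <= (size ys).+1)%N.

(* the recursion f(t_1) = t_1, f(t_(j+1)) = t_(j+1) - f(t_j) along t_1,t_2,... *)
Fixpoint fchain (prev : int) (s : seq nat) : seq int :=
  match s with
  | [::] => [::]
  | t :: s' => let v := t%:Z - prev in v :: fchain v s'
  end.

Definition fD (xs ys : seq nat) (t : nat) : int :=
  nth 0 (fchain 0 (alt xs ys)) (index t (alt xs ys)).

Definition Dgraph (xs ys : seq nat) (X Y : nat -> vtx) : seq edge :=
  let p := size xs in let q := size ys in let f := fD xs ys in
  [seq (if i == 1%N then VA else X i.-1, X i, (at1 xs i)%:Z) | i <- iota 1 p] ++
  [seq (if i == 1%N then VA else Y i.-1, Y i, (at1 ys i)%:Z) | i <- iota 1 q] ++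
  [seq (X i, Y i, f (at1 ys i)) | i <- iota 1 q] ++
  [seq (Y i, X i.+1, f (at1 xs i.+1)) | i <- iota 1 p.-1].

Definition chainpath (xs : seq nat) (X : nat -> vtx) : seq step :=
  [seq ((if i == 1%N then VA else X i.-1, X i, (at1 xs i)%:Z), true)
  | i <- iota 1 (size xs)].

Definition chainend (xs : seq nat) (X : nat -> vtx) : vtx :=
  last VA [seq X i | i <- iota 1 (size xs)].

Definition conclusions (n : nat) (xs ys : seq nat) (X Y : nat -> vtx) : Prop :=
  let f := fD xs ys in
  let D := Dgraph xs ys X Y in
  (forall i, (1 <= i <= size xs)%N -> 0 < f (at1 xs i) <= (at1 xs i)%:Z) /\
  (forall i, (1 <= i <= size ys)%N -> 0 < f (at1 ys i) < (at1 ys i)%:Z) /\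
  (forall e, e \in D -> 1 <= e.2 <= n%:Z - 1) /\
  geodesic n D VA (chainend xs X) (chainpath xs X) /\
  wcong (plen n (chainpath xs X)) (\sum_(x <- xs) omega n x%:Z) /\
  geodesic n D VA (chainend ys Y) (chainpath ys Y) /\
  wcong (plen n (chainpath ys Y)) (\sum_(y <- ys) omega n y%:Z) /\
  (forall v, v \in VA :: [seq X i | i <- iota 1 (size xs)]
                      ++ [seq Y i | i <- iota 1 (size ys)] ->
     coherent n D VA v).

(* Main.v *)
Require Import Defs.
From HB Require Import structures.
From mathcomp Require Import all_boot all_order all_algebra.
From mathcomp Require Import zify.
From Stdlib Require Import Classical.
Set Implicit Arguments. Unset Strict Implicit. Unset Printing Implicit Defensive.
Import Order.TTheory GRing.Theory Num.Theory.
Local Open Scope ring_scope.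


Definition incone n (v : wt n) := exists a : 'I_n -> 'I_n -> nat,
  wcong v (\sum_(i < n) \sum_(j < n | (i < j)%N) proot i j *+ a i j).

Definition vf n (v : wt n) (k : nat) : int :=
  if insub k is Some i then v i else 0.

Definition psum n (v : wt n) (m : nat) : int := \sum_(0 <= k < m) vf v k.

Lemma vf_val n (v : wt n) (i : 'I_n) : vf v i = v i.
Proof. by rewrite /vf valK. Qed.

Lemma vf_out n (v : wt n) k : (n <= k)%N -> vf v k = 0.
Proof. by move=> h; rewrite /vf insubF // ltnNge h. Qed.

Lemma vfD n (v w : wt n) k : vf (v + w) k = vf v k + vf w k.
Proof. rewrite /vf; case: insubP => [i _ _|_]; by rewrite ?ffunE ?addr0. Qed.

Lemma vfN n (v : wt n) k : vf (- v) k = - vf v k.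
Proof. rewrite /vf; case: insubP => [i _ _|_]; by rewrite ?ffunE ?oppr0. Qed.

Lemma vf0 n k : vf (0 : wt n) k = 0.
Proof. rewrite /vf; case: insubP => [i _ _|_]; by rewrite ?ffunE. Qed.

Lemma vf_ffun n (g : nat -> int) k :
  vf ([ffun i : 'I_n => g (val i)]) k = if (k < n)%N then g k else 0.
Proof.
rewrite /vf; case: insubP => [i -> <-|/negbTE -> //]; by rewrite ffunE.
Qed.

Lemma psumD n (v w : wt n) m : psum (v + w) m = psum v m + psum w m.
Proof. rewrite /psum -big_split; apply: eq_bigr => k _; exact: vfD. Qed.

Lemma psumN n (v : wt n) m : psum (- v) m = - psum v m.
Proof. rewrite /psum -sumrN; apply: eq_bigr => k _; exact: vfN. Qed.

Lemma psum0 n m : psum (0 : wt n) m = 0.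
Proof. rewrite /psum big1 // => k _; exact: vf0. Qed.

Lemma psumB n (v w : wt n) m : psum (v - w) m = psum v m - psum w m.
Proof. by rewrite psumD psumN. Qed.

Lemma psum_sum n I (r : seq I) (P : pred I) (F : I -> wt n) m :
  psum (\sum_(i <- r | P i) F i) m = \sum_(i <- r | P i) psum (F i) m.
Proof.
apply: (big_morph (fun v => psum v m)); [move=> v w; exact: psumD | exact: psum0].
Qed.

Lemma psumMn n (v : wt n) c m : psum (v *+ c) m = psum v m *+ c.
Proof.
elim: c => [|c IH]; first by rewrite !mulr0n psum0.
by rewrite !mulrS psumD IH.
Qed.

Lemma psumS n (v : wt n) m : psum v m.+1 = psum v m + vf v m.
Proof. by rewrite /psum big_nat_recr. Qed.

Lemma psum_0 n (v : wt n) : psum v 0 = 0.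
Proof. by rewrite /psum big_geq. Qed.

Lemma psum_ffun n (g : nat -> int) m :
  psum ([ffun i : 'I_n => g (val i)]) m = \sum_(0 <= k < minn m n) g k.
Proof.
elim: m => [|m IH]; first by rewrite psum_0 min0n big_geq.
rewrite psumS IH vf_ffun.
have [h|h] := boolP (m < n)%N.
  have -> : minn m.+1 n = m.+1 by lia.
  have -> : minn m n = m by lia.
  by rewrite big_nat_recr.
have -> : minn m.+1 n = n by lia.
have -> : minn m n = n by lia.
by rewrite addr0.
Qed.

Lemma sum_const_nat (z : int) N : \sum_(0 <= k < N) z = z *+ N.
Proof.
elim: N => [|N IH]; first by rewrite big_geq.
by rewrite big_nat_recr //= IH mulrS addrC.
Qed.

Lemma psum_const n (z : int) m : psum ([ffun _ : 'I_n => z]) m = z *+ minn m n.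
Proof.
by rewrite (@psum_ffun n (fun _ => z) m) sum_const_nat.
Qed.

Lemma sum_delta (F : nat -> int) i N :
  \sum_(0 <= k < N) (if k == i then F k else 0) = if (i < N)%N then F i else 0.
Proof.
elim: N => [|N IH]; first by rewrite big_geq.
rewrite big_nat_recr //= IH; case: (ltngtP i N) => h.
- by rewrite ltnS (ltnW h) addr0.
- by rewrite ltnS leqNgt h addr0.
- by rewrite h ltnSn add0r.
Qed.

Lemma psum_proot n (i j : 'I_n) m :
  psum (proot i j) m = ((i < m)%N : nat)%:Z - ((j < m)%N : nat)%:Z.
Proof.
have -> : proot i j = [ffun k : 'I_n => ((val k == val i) : nat)%:Z - ((val k == val j) : nat)%:Z].
  by apply/ffunP => k; rewrite !ffunE.
rewrite (@psum_ffun n (fun k => ((k == val i):nat)%:Z - ((k == val j):nat)%:Z)).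
have H (a : 'I_n) : \sum_(0 <= k < minn m n) ((k == val a) : nat)%:Z = ((a < m)%N : nat)%:Z.
  rewrite (eq_bigr (fun k => if k == val a then 1 else 0)); last first.
    by move=> k _; case: (k == val a).
  rewrite (@sum_delta (fun _ => 1)); by rewrite leq_min ltn_ord andbT; case: (a < m)%N.
by rewrite big_split /= sumrN !H.
Qed.

Definition Scone n (a : 'I_n -> 'I_n -> nat) : wt n :=
  \sum_(i < n) \sum_(j < n | (i < j)%N) proot i j *+ a i j.

Lemma inner_nat (i : nat) (G : nat -> int) c N :
  \sum_(0 <= j < N | (i < j)%N) (G j *+ (if j == i.+1 then c else 0%N))
  = if (i.+1 < N)%N then G i.+1 *+ c else 0.
Proof.
rewrite big_mkcond; elim: N => [|N IH]; first by rewrite big_geq.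
rewrite big_nat_recr //= IH; case: (ltngtP i.+1 N) => h.
- rewrite ?ltnS ?(ltnW h) ?(gtn_eqF h) ?mulr0n; case: (i < N)%N; rewrite ?addr0 //.
- by rewrite ltnS leqNgt h addr0.
- by rewrite -h ltnSn add0r.
Qed.

Lemma shift_delta (F : nat -> int) k N :
  \sum_(0 <= i < N) (if i.+1 == k then F i.+1 else 0) = if (0 < k <= N)%N then F k else 0.
Proof.
elim: N => [|N IH]; first by rewrite big_geq //; case: k => [|k] //=; rewrite andbF.
rewrite big_nat_recr //= IH; case: (ltngtP k N.+1) => h.
- have -> : (k <= N)%N by rewrite -ltnS.
  by rewrite addr0.
- have -> : (k <= N)%N = false by rewrite leqNgt (ltnW h).
  by rewrite andbF addr0.
- by rewrite h ltnn andbF add0r.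
Qed.

Lemma cone_exact n (v : wt n) : (forall m, 0 <= psum v m) -> psum v n = 0 ->
  v = Scone (fun i j => if val j == (val i).+1 then `|psum v (val i).+1|%N else 0%N).
Proof.
move=> Hge Hn; apply/ffunP => k; rewrite /Scone sum_ffunE.
set p := psum v.
have E1 : forall i : 'I_n, (\sum_(j < n | (i < j)%N) proot i j *+
     (if val j == (val i).+1 then `|p (val i).+1|%N else 0%N)) k =
   (fun i : nat => if (i.+1 < n)%N then
      (((val k == i) : nat)%:Z - ((val k == i.+1) : nat)%:Z) *+ `|p i.+1|%N else 0) (val i).
  move=> i; rewrite sum_ffunE /=.
  rewrite (eq_bigr (fun j : 'I_n => (fun j : nat => (((val k == val i) : nat)%:Z - ((val k == j) : nat)%:Z)
                       *+ (if j == (val i).+1 then `|p (val i).+1|%N else 0%N)) (val j))); last first.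
    by move=> j _; rewrite ffunMnE !ffunE.
  rewrite -(big_mkord (fun j => (val i < j)%N) (fun j : nat => (((val k == val i) : nat)%:Z - ((val k == j) : nat)%:Z)
                       *+ (if j == (val i).+1 then `|p (val i).+1|%N else 0%N))).
  by rewrite inner_nat.
rewrite (eq_bigr _ (fun i _ => E1 i)).
rewrite -(big_mkord xpredT (fun i : nat => if (i.+1 < n)%N then
      (((val k == i) : nat)%:Z - ((val k == i.+1) : nat)%:Z) *+ `|p i.+1|%N else 0)).
rewrite (@eq_big_nat _ _ _ 0 n _ (fun i => (((val k == i) : nat)%:Z - ((val k == i.+1) : nat)%:Z) * p i.+1)); last first.
  move=> i /andP [_ hi]; case: ltnP => h.
    by rewrite -mulr_natr natz gez0_abs.
  have -> : i.+1 = n by apply/eqP; rewrite eqn_leq h hi.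
  by rewrite /p Hn mulr0.
rewrite (eq_bigr (fun i => (if i == val k then p i.+1 else 0) - (if i.+1 == val k then p i.+1 else 0))); last first.
  move=> i _; rewrite mulrBl; congr (_ - _).
    by rewrite eq_sym; case: (_ == _); rewrite ?mul1r ?mul0r.
  by rewrite eq_sym; case: (_ == _); rewrite ?mul1r ?mul0r.
rewrite sumrB sum_delta shift_delta ltn_ord (ltnW (ltn_ord k)) andbT.
rewrite /p psumS vf_val.
case: (posnP (val k)) => hk; last by rewrite addrC addKr.
by rewrite hk /= psum_0 add0r subr0.
Qed.

Lemma ffun_const0 n : [ffun _ : 'I_n => (0 : int)] = 0.
Proof. by apply/ffunP => i; rewrite !ffunE. Qed.

Lemma cone_crit n (v : wt n) (z : int) :
  (forall m, 0 <= psum v m + z *+ minn m n) -> psum v n + z *+ n = 0 -> incone v.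
Proof.
move=> H1 H2; set w := v + [ffun _ => z].
have Pw m : psum w m = psum v m + z *+ minn m n by rewrite psumD psum_const.
have Ew := @cone_exact n w (fun m => ltac:(rewrite Pw; exact: H1 m)) ltac:(rewrite Pw minnn; exact: H2).
move: Ew; set a := (fun i j : 'I_n => _) => Ew.
exists a, (- z); rewrite -[\sum_(i < n) _]/(Scone a) -Ew; apply/ffunP => k; rewrite !ffunE.
by rewrite addrK.
Qed.

Lemma SconeD n (a b : 'I_n -> 'I_n -> nat) :
  Scone (fun i j => (a i j + b i j)%N) = Scone a + Scone b.
Proof.
rewrite /Scone -big_split; apply: eq_bigr => i _.
rewrite -big_split; apply: eq_bigr => j _; exact: mulrnDr.
Qed.

Lemma Scone0 n : Scone (fun _ _ : 'I_n => 0%N) = 0.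
Proof. by rewrite /Scone big1 // => i _; rewrite big1 // => j _; rewrite mulr0n. Qed.

Lemma incone0 n : incone (0 : wt n).
Proof.
exists (fun _ _ => 0%N), 0; rewrite -[\sum_(i < n) _]/(Scone _) Scone0 add0r.
by rewrite ffun_const0.
Qed.

Lemma inconeD n (v w : wt n) : incone v -> incone w -> incone (v + w).
Proof.
move=> [a [z1 Ha]] [b [z2 Hb]].
exists (fun i j => (a i j + b i j)%N), (z1 + z2).
rewrite -[\sum_(i < n) _]/(Scone _) SconeD.
rewrite -[\sum_(i < n) _]/(Scone _) in Ha; rewrite -[\sum_(i < n) _]/(Scone _) in Hb.
rewrite Ha Hb; apply/ffunP => k; rewrite !ffunE; lia.
Qed.

Lemma incone_eq n (v w : wt n) : v = w -> incone v -> incone w.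
Proof. by move=> ->. Qed.

Lemma psum_Scone n (a : 'I_n -> 'I_n -> nat) m :
  psum (Scone a) m = \sum_(i < n) \sum_(j < n | (i < j)%N)
      ((((i < m)%N : nat)%:Z - ((j < m)%N : nat)%:Z) *+ a i j).
Proof.
rewrite /Scone psum_sum; apply: eq_bigr => i _.
rewrite psum_sum; apply: eq_bigr => j _.
by rewrite psumMn psum_proot.
Qed.

Lemma psum_Scone_ge0 n (a : 'I_n -> 'I_n -> nat) m : 0 <= psum (Scone a) m.
Proof.
rewrite psum_Scone; apply: sumr_ge0 => i _; apply: sumr_ge0 => j hij.
apply: mulrn_wge0.
case: (ltnP j m) => h; first by rewrite (ltn_trans hij h).
by case: (i < m)%N.
Qed.

Lemma psum_Scone_n n (a : 'I_n -> 'I_n -> nat) : psum (Scone a) n = 0.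
Proof.
rewrite psum_Scone; apply: big1 => i _; apply: big1 => j _.
by rewrite !ltn_ord subrr mul0rn.
Qed.

Lemma incone_antisym n (v : wt n) : (0 < n)%N -> incone v -> incone (- v) ->
  exists z : int, v = [ffun _ => z].
Proof.
move=> n0 [a [z1 Ha]] [b [z2 Hb]].
rewrite -[\sum_(i < n) _]/(Scone _) in Ha; rewrite -[\sum_(i < n) _]/(Scone _) in Hb.
have Pa m : psum v m = psum (Scone a) m + z1 *+ minn m n by rewrite Ha psumD psum_const.
have Pb m : - psum v m = psum (Scone b) m + z2 *+ minn m n by rewrite -psumN Hb psumD psum_const.
have Hz : z1 + z2 = 0.
  have := Pa n; have := Pb n; rewrite !psum_Scone_n !add0r minnn => e1 e2.
  have : (z1 + z2) *+ n == 0 by rewrite mulrnDl -e1 -e2 addrN.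
  by rewrite mulrn_eq0 -[n == 0%N]negbK -lt0n n0 /= => /eqP.
have Z m : psum (Scone a) m = 0.
  have h1 := psum_Scone_ge0 a m; have h2 := psum_Scone_ge0 b m.
  have e : psum (Scone a) m + psum (Scone b) m = 0.
    have := Pa m; have := Pb m => e1 e2.
    have : psum (Scone a) m + psum (Scone b) m = - ((z1 + z2) *+ minn m n).
      rewrite mulrnDl; apply/eqP; rewrite -subr_eq0; apply/eqP.
      move: e1 e2; set P := psum v m; set A := psum (Scone a) m; set B := psum (Scone b) m.
      set X := z1 *+ _; set Y := z2 *+ _ => e1 e2.
      have -> : A = P - X by rewrite e2 addrK.
      have -> : B = - P - Y by rewrite e1 addrK.
      rewrite opprD; lia.
    by rewrite Hz mul0rn oppr0.
  lia.
exists z1; rewrite Ha; apply/ffunP => k; rewrite !ffunE.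
have : Scone a k = 0.
  by have := psumS (Scone a) k; rewrite !Z vf_val add0r => <-.
by move=> ->; rewrite add0r.
Qed.

Lemma wle_antisym n (mu nu : wt n) : (0 < n)%N -> wle mu nu -> wle nu mu -> wcong mu nu.
Proof.
move=> n0 h1 h2.
have h2' : incone (- (nu - mu)) by rewrite opprB.
have [z Hz] := incone_antisym n0 h1 h2'.
exists (- z); apply/ffunP => k; move/ffunP: Hz => /(_ k); rewrite !ffunE => e.
have -> : mu k = nu k - (nu k - mu k) by rewrite subKr.
by rewrite e.
Qed.


Definition pot_ok n (E : seq edge) (d : vtx -> wt n) := forall e, e \in E ->
  incone (d e.1.1 + omega n e.2 - d e.1.2) /\
  incone (d e.1.2 + omega n (n%:Z - e.2) - d e.1.1).

Lemma chain_eq (V : zmodType) (a b c p w : V) : a + b - c + (c + p - w) = a + (b + p) - w.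
Proof. by rewrite !addrA subrK. Qed.

Lemma walk_lb n E (d : vtx -> wt n) : pot_ok E d ->
  forall s u v, walk E u s v -> incone (d u + plen n s - d v).
Proof.
move=> Hd; elim=> [|[e b] s IH] u v /=.
  move/eqP => ->; rewrite /plen big_nil addr0 subrr; exact: incone0.
move/andP=> [he hw]; have [H1 H2] := Hd e he.
rewrite /plen big_cons /= -/(plen n s).
case: b hw => /andP [/eqP h1 hw]; rewrite -h1.
  apply: incone_eq (inconeD H1 (IH _ _ hw)).
  exact: chain_eq.
apply: incone_eq (inconeD H2 (IH _ _ hw)); exact: chain_eq.
Qed.

Lemma wcong_sym n (x y : wt n) : wcong x y -> wcong y x.
Proof.
move=> [z ->]; exists (- z); apply/ffunP => k; rewrite !ffunE; by rewrite addrK.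
Qed.

Lemma wcong_trans n (x y w : wt n) : wcong x y -> wcong y w -> wcong x w.
Proof.
move=> [z1 ->] [z2 ->]; exists (z2 + z1); apply/ffunP => k; rewrite !ffunE; by rewrite addrA.
Qed.

Lemma wcong_refl n (x : wt n) : wcong x x.
Proof. exists 0; apply/ffunP => k; rewrite !ffunE; by rewrite addr0. Qed.

Lemma lb_VA n E (d : vtx -> wt n) s v : pot_ok E d -> d VA = 0 ->
  walk E VA s v -> wle (d v) (plen n s).
Proof.
move=> Hd h0 hw; have := walk_lb Hd hw; rewrite h0 add0r; exact.
Qed.

Lemma geo_ok n E (d : vtx -> wt n) v P : (0 < n)%N -> pot_ok E d -> d VA = 0 ->
  walk E VA P v -> plen n P = d v -> geodesic n E VA v P.
Proof.
move=> n0 Hd h0 hw hP; split => //.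
case=> s' [hw' [hle hnc]]; apply: hnc.
apply: wle_antisym => //; rewrite hP; exact: lb_VA hw'.
Qed.

Lemma coh_ok n E (d : vtx -> wt n) v P : (0 < n)%N -> pot_ok E d -> d VA = 0 ->
  walk E VA P v -> plen n P = d v -> coherent n E VA v.
Proof.
move=> n0 Hd h0 hw hP.
have key s : geodesic n E VA v s -> wcong (plen n P) (plen n s).
  move=> [hs hng]; apply: NNPP => hnc; apply: hng; exists P; split => //.
  split => //; rewrite hP; exact: lb_VA hs.
move=> s1 s2 g1 g2; apply: wcong_trans (key _ g2).
exact: wcong_sym (key _ g1).
Qed.


Definition chainH n (xs ys : seq nat) := [/\ (size ys <= size xs <= (size ys).+1)%N,
  forall j, (j < size xs)%N -> (0 < nth 0%N xs j < n)%N,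
  forall j, (j < size ys)%N -> (nth 0%N xs j < nth 0%N ys j < n)%N &
  forall j, (j.+1 < size xs)%N -> (nth 0%N ys j < nth 0%N xs j.+1)%N].

Definition Fn (xs ys : seq nat) j := (\sum_(0 <= i < j) (nth 0%N ys i - nth 0%N xs i))%N.
Definition SS (s : seq nat) j m := (\sum_(0 <= i < j) minn m (nth 0%N s i))%N.
Definition ylast (ys : seq nat) j := if j is j'.+1 then nth 0%N ys j' else 0%N.

Lemma SS_S s j m : SS s j.+1 m = (SS s j m + minn m (nth 0%N s j))%N.
Proof. by rewrite /SS big_nat_recr. Qed.

Lemma Fn_S xs ys j : Fn xs ys j.+1 = (Fn xs ys j + (nth 0%N ys j - nth 0%N xs j))%N.
Proof. by rewrite /Fn big_nat_recr. Qed.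

Lemma SS_0 s m : SS s 0 m = 0%N.
Proof. by rewrite /SS big_geq. Qed.

Lemma Fn_0 xs ys : Fn xs ys 0 = 0%N.
Proof. by rewrite /Fn big_geq. Qed.

Lemma invariants n xs ys : chainH n xs ys -> forall j, (j <= size ys)%N ->
  (Fn xs ys j <= ylast ys j)%N /\ ((0 < j)%N -> (0 < Fn xs ys j)%N) /\
  forall m, [/\ (SS xs j m <= SS ys j m)%N, (SS ys j m <= SS xs j m + Fn xs ys j)%N,
     (SS ys j m <= SS xs j m + m)%N &
     (Fn xs ys j + SS xs j m <= SS ys j m + (ylast ys j - m))%N].
Proof.
case=> Hs Hx Hy Hyx; elim=> [|j IH] hj.
  by rewrite Fn_0 /=; split => //; split => // m; rewrite !SS_0.
have hj' : (j < size ys)%N by [].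
have [IH1 [IH2 IH3]] := IH (ltnW hj).
have hxy := Hy j hj'.
have hl : (ylast ys j <= nth 0%N xs j)%N.
  case: j {IH IH1 IH2 IH3 hj hj' hxy} => [|j] //= in hj *.
  apply: ltnW; apply: Hyx; lia.
rewrite Fn_S /=; split; first by lia.
split; first by lia.
move=> m; have [a1 a2 a3 a4] := IH3 m; rewrite !SS_S; split; lia.
Qed.

Definition DD n (s : seq nat) j : wt n := \sum_(0 <= i < j) omega n (nth 0%N s i)%:Z.

Lemma DD_S n s j : DD n s j.+1 = DD n s j + omega n (nth 0%N s j)%:Z.
Proof. by rewrite /DD big_nat_recr. Qed.

Lemma DD_0 n s : DD n s 0 = 0.
Proof. by rewrite /DD big_geq. Qed.

Lemma sum_lt_nat a N : \sum_(0 <= k < N) ((k < a)%N : nat)%:Z = (minn N a)%:Z.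
Proof.
elim: N => [|N IH]; first by rewrite big_geq // min0n.
rewrite big_nat_recr //= IH -PoszD; congr Posz; case: (ltnP N a) => h /=; lia.
Qed.

Lemma psum_om n a m : (a < n)%N -> psum (omega n a%:Z) m = (minn m a)%:Z.
Proof.
move=> han.
have -> : omega n a%:Z = [ffun i : 'I_n => ((val i < a)%N : nat)%:Z].
  by apply/ffunP => i; rewrite !ffunE modz_nat modn_small // ltz_nat.
rewrite (@psum_ffun n (fun k => ((k < a)%N : nat)%:Z)) sum_lt_nat; congr Posz; lia.
Qed.

Lemma psum_DD n s j m : (forall i, (i < j)%N -> (nth 0%N s i < n)%N) ->
  psum (DD n s j) m = (SS s j m)%:Z.
Proof.
elim: j => [|j IH] H; first by rewrite DD_0 psum0 SS_0.
rewrite DD_S psumD IH; last by move=> i hi; apply: H; lia.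
by rewrite psum_om ?SS_S ?PoszD //; apply: H.
Qed.

Lemma mulrn_int (z : int) k : z *+ k = z * k%:Z.
Proof. by rewrite -mulr_natr natz. Qed.

Lemma chain_xlt n xs ys : chainH n xs ys -> forall i, (i < size xs)%N -> (nth 0%N xs i < n)%N.
Proof. by case=> _ Hx _ _ i /Hx /andP []. Qed.

Lemma chain_ylt n xs ys : chainH n xs ys -> forall i, (i < size ys)%N -> (nth 0%N ys i < n)%N.
Proof. by case=> _ _ Hy _ i /Hy /andP []. Qed.

Lemma psum_DDX n xs ys j m : chainH n xs ys -> (j <= size xs)%N ->
  psum (DD n xs j) m = (SS xs j m)%:Z.
Proof. move=> H hj; apply: psum_DD => i hi; apply: (chain_xlt H); lia. Qed.

Lemma psum_DDY n xs ys j m : chainH n xs ys -> (j <= size ys)%N ->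
  psum (DD n ys j) m = (SS ys j m)%:Z.
Proof. move=> H hj; apply: psum_DD => i hi; apply: (chain_ylt H); lia. Qed.

Lemma E1f n s j : incone (DD n s j + omega n (nth 0%N s j)%:Z - DD n s j.+1).
Proof. by rewrite DD_S subrr; exact: incone0. Qed.

Lemma E1b n s j : (0 < nth 0%N s j < n)%N -> (forall i, (i <= j)%N -> (nth 0%N s i < n)%N) ->
  incone (DD n s j.+1 + omega n (n%:Z - (nth 0%N s j)%:Z) - DD n s j).
Proof.
move=> h1 h2; have hle : (nth 0%N s j <= n)%N by lia.
rewrite (subzn hle).
have P1 m : psum (DD n s j) m = (SS s j m)%:Z by apply: psum_DD => i hi; apply: h2; lia.
have P2 m : psum (DD n s j.+1) m = (SS s j.+1 m)%:Z by apply: psum_DD => i hi; apply: h2; lia.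
have P3 m : psum (omega n (n - nth 0%N s j)%N%:Z) m = (minn m (n - nth 0%N s j))%:Z by apply: psum_om; lia.
apply: (@cone_crit n _ (-1)) => [m|]; rewrite mulrn_int psumB psumD P1 P2 P3 SS_S; lia.
Qed.

Lemma E3f n xs ys j : chainH n xs ys -> (j < size ys)%N ->
  incone (DD n xs j.+1 + omega n (Fn xs ys j.+1)%:Z - DD n ys j.+1).
Proof.
move=> H hj; have [F1 [F2 F3]] := invariants H hj.
have hq := chain_ylt H hj; move: F1 F2; rewrite /= => F1 F2.
have Hs : (size ys <= size xs)%N by case: H => /andP [].
have P3 m : psum (omega n (Fn xs ys j.+1)%:Z) m = (minn m (Fn xs ys j.+1))%:Z by apply: psum_om; lia.
apply: (@cone_crit n _ 0) => [m|]; rewrite mulrn_int psumB psumD P3 (psum_DDX _ H) ?(psum_DDY _ H);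
  try lia; [have [a1 a2 a3 a4] := F3 m | have [a1 a2 a3 a4] := F3 n]; simpl in *; lia.
Qed.

Lemma E3b n xs ys j : chainH n xs ys -> (j < size ys)%N ->
  incone (DD n ys j.+1 + omega n (n%:Z - (Fn xs ys j.+1)%:Z) - DD n xs j.+1).
Proof.
move=> H hj; have [F1 [F2 F3]] := invariants H hj.
have hq := chain_ylt H hj; move: F1 F2; rewrite /= => F1 F2.
have F2' := F2 (ltn0Sn j).
have Hs : (size ys <= size xs)%N by case: H => /andP [].
have hle : (Fn xs ys j.+1 <= n)%N by lia.
rewrite (subzn hle).
have P3 m : psum (omega n (n - Fn xs ys j.+1)%N%:Z) m = (minn m (n - Fn xs ys j.+1))%:Z by apply: psum_om; lia.
apply: (@cone_crit n _ (-1)) => [m|]; rewrite mulrn_int psumB psumD P3 (psum_DDX _ H) ?(psum_DDY _ H);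
  try lia; [have [a1 a2 a3 a4] := F3 m | have [a1 a2 a3 a4] := F3 n]; simpl in *; lia.
Qed.

Lemma E4f n xs ys j : chainH n xs ys -> (j.+1 < size xs)%N ->
  incone (DD n ys j.+1 + omega n (nth 0%N xs j.+1 - Fn xs ys j.+1)%N%:Z - DD n xs j.+2).
Proof.
move=> H hj.
have hjq : (j < size ys)%N by case: H => /andP [_ h] _ _ _; lia.
have [F1 [F2 F3]] := invariants H hjq.
have hq := chain_ylt H hjq; have hx := chain_xlt H hj.
have hyx : (nth 0%N ys j < nth 0%N xs j.+1)%N by case: H => _ _ _ h; apply: h.
move: F1 F2; rewrite /= => F1 F2.
have P3 m : psum (omega n (nth 0%N xs j.+1 - Fn xs ys j.+1)%N%:Z) m =
   (minn m (nth 0%N xs j.+1 - Fn xs ys j.+1))%:Z by apply: psum_om; lia.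
have PX m : psum (DD n xs j.+2) m = (SS xs j.+2 m)%:Z by apply: psum_DDX H _.
have PY m : psum (DD n ys j.+1) m = (SS ys j.+1 m)%:Z by apply: psum_DDY H _.
apply: (@cone_crit n _ 0) => [m|]; rewrite mulrn_int psumB psumD P3 PX PY (SS_S xs j.+1);
  try lia; [have [a1 a2 a3 a4] := F3 m | have [a1 a2 a3 a4] := F3 n]; simpl in *; lia.
Qed.

Lemma E4b n xs ys j : chainH n xs ys -> (j.+1 < size xs)%N ->
  incone (DD n xs j.+2 + omega n (n%:Z - (nth 0%N xs j.+1 - Fn xs ys j.+1)%N%:Z) - DD n ys j.+1).
Proof.
move=> H hj.
have hjq : (j < size ys)%N by case: H => /andP [_ h] _ _ _; lia.
have [F1 [F2 F3]] := invariants H hjq.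
have hq := chain_ylt H hjq; have hx := chain_xlt H hj.
have hyx : (nth 0%N ys j < nth 0%N xs j.+1)%N by case: H => _ _ _ h; apply: h.
move: F1 F2; rewrite /= => F1 F2.
have hle : ((nth 0%N xs j.+1 - Fn xs ys j.+1)%N <= n)%N by lia.
rewrite (subzn hle).
have P3 m : psum (omega n (n - (nth 0%N xs j.+1 - Fn xs ys j.+1))%N%:Z) m =
   (minn m (n - (nth 0%N xs j.+1 - Fn xs ys j.+1)))%:Z by apply: psum_om; lia.
have PX m : psum (DD n xs j.+2) m = (SS xs j.+2 m)%:Z by apply: psum_DDX H _.
have PY m : psum (DD n ys j.+1) m = (SS ys j.+1 m)%:Z by apply: psum_DDY H _.
apply: (@cone_crit n _ (-1)) => [m|]; rewrite mulrn_int psumB psumD P3 PX PY (SS_S xs j.+1);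
  try lia; [have [a1 a2 a3 a4] := F3 m | have [a1 a2 a3 a4] := F3 n]; simpl in *; lia.
Qed.


Lemma alt_nth (xs ys : seq nat) : (size ys <= size xs <= (size ys).+1)%N ->
  size (alt xs ys) = (size xs + size ys)%N /\
  (forall j, (j < size xs)%N -> nth 0%N (alt xs ys) j.*2 = nth 0%N xs j) /\
  (forall j, (j < size ys)%N -> nth 0%N (alt xs ys) j.*2.+1 = nth 0%N ys j).
Proof.
elim: xs ys => [|x xs IH] [|y ys] //=.
- case: xs {IH} => [|x' xs] //= _; split => //; split => // [] [] //.
- rewrite !ltnS => hs; have [h1 [h2 h3]] := IH ys hs.
  split; first by rewrite h1 addnS.
  split; move=> [|j] //= hj; [exact: h2 | exact: h3].
Qed.

Lemma fchain_size p s : size (fchain p s) = size s.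
Proof. by elim: s p => [|a s IH] p //=; rewrite IH. Qed.

Lemma fchain_nthS p s k : (k.+1 < size s)%N ->
  nth 0 (fchain p s) k.+1 = (nth 0%N s k.+1)%:Z - nth 0 (fchain p s) k.
Proof.
elim: s p k => [|a s IH] p k //=.
case: k => [|k] /=.
  by case: s {IH} => [|b s].
by move=> hk; rewrite IH.
Qed.

Definition goodH n (xs ys : seq nat) := [/\ interlaced xs ys,
  (forall t, t \in xs -> (0 < t < n)%N) & (forall t, t \in ys -> (0 < t < n)%N)].

Lemma good_chain n xs ys : goodH n xs ys -> chainH n xs ys.
Proof.
case=> /andP [Hso Hs] Hxm Hym.
have [Ha [Ax Ay]] := alt_nth Hs.
have lt a b : (a < b)%N -> (b < size (alt xs ys))%N ->
    (nth 0%N (alt xs ys) a < nth 0%N (alt xs ys) b)%N.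
  move=> hab hb; apply: (sorted_ltn_nth ltn_trans 0%N Hso) => //; rewrite inE //; lia.
split => //.
- by move=> j hj; apply: Hxm; exact: mem_nth.
- move=> j hj; apply/andP; split; last by have /andP [] := Hym _ (mem_nth 0%N hj).
  rewrite -Ax ?(leq_trans hj) -?Ay //; last by case/andP: Hs.
  apply: lt => //; rewrite Ha; lia.
- move=> j hj; have hjy : (j < size ys)%N by case/andP: Hs => _ h; lia.
  rewrite -Ay // -Ax //; rewrite -[(j.+1).*2]/(j.*2.+2).
  apply: lt => //; rewrite Ha; lia.
Qed.

Lemma Fc_vals n xs ys : goodH n xs ys -> forall j,
  ((j < size xs)%N -> nth 0 (fchain 0 (alt xs ys)) j.*2 = (nth 0%N xs j - Fn xs ys j)%N%:Z) /\
  ((j < size ys)%N -> nth 0 (fchain 0 (alt xs ys)) j.*2.+1 = (Fn xs ys j.+1)%:Z).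
Proof.
move=> G; have H := good_chain G; case: (G) => /andP [_ Hs] _ _.
have [Ha [Ax Ay]] := alt_nth Hs.
have [_ _ Hy Hyx] := H.
have Hs1 : (size ys <= size xs)%N by case/andP: Hs.
have Hs2 : (size xs <= (size ys).+1)%N by case/andP: Hs.
have X0 : (0 < size xs)%N -> nth 0 (fchain 0 (alt xs ys)) 0 = (nth 0%N xs 0)%:Z.
  move=> h; rewrite -(Ax 0%N h) /=.
  case E: (alt xs ys) => [|a t] /=; first by move: Ha; rewrite E /=; lia.
  by rewrite subr0.
have step1 j : (j < size ys)%N ->
    nth 0 (fchain 0 (alt xs ys)) j.*2 = (nth 0%N xs j - Fn xs ys j)%N%:Z ->
    nth 0 (fchain 0 (alt xs ys)) j.*2.+1 = (Fn xs ys j.+1)%:Z.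
  move=> hj e; rewrite fchain_nthS; last by rewrite Ha; lia.
  rewrite e Ay // Fn_S.
  have [F1 _] := invariants H (ltnW hj).
  have := Hy j hj.
  have hl : (ylast ys j <= nth 0%N xs j)%N.
    case: j {e F1} hj => [|j] //= hj; apply: ltnW; apply: Hyx; lia.
  move=> hh; lia.
elim=> [|j [IH1 IH2]].
  split => [h|h]; first by rewrite X0 // Fn_0 subn0.
  by apply: step1 => //; rewrite X0 ?Fn_0 ?subn0 //; lia.
have A j' : (j' < size xs)%N -> (j' <= size ys)%N ->
   nth 0 (fchain 0 (alt xs ys)) (j'.*2) = (nth 0%N xs j' - Fn xs ys j')%N%:Z -> True by [].
split => [h|h].
  have hjy : (j < size ys)%N by lia.
  rewrite -[(j.+1).*2]/(j.*2.+2) fchain_nthS; last by rewrite Ha; lia.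
  rewrite (IH2 hjy) -[j.*2.+2]/((j.+1).*2) Ax //.
  have [F1 _] := invariants H hjy; have := Hyx j h; move: F1 => /= F1 hh; lia.
apply: step1 => //.
have hjy : (j < size ys)%N by lia.
rewrite -[(j.+1).*2]/(j.*2.+2) fchain_nthS; last by rewrite Ha; lia.
rewrite (IH2 hjy) -[j.*2.+2]/((j.+1).*2) Ax; last by lia.
have [F1 _] := invariants H hjy; have := Hyx j; move: F1 => /= F1 hh; have := hh ltac:(lia); lia.
Qed.

Lemma uniq_alt n xs ys : goodH n xs ys -> uniq (alt xs ys).
Proof. by case=> /andP [Hso _] _ _; apply: sorted_uniq Hso; [exact: ltn_trans | exact: ltnn]. Qed.

Lemma fD_x n xs ys j : goodH n xs ys -> (j < size xs)%N ->
  fD xs ys (nth 0%N xs j) = (nth 0%N xs j - Fn xs ys j)%N%:Z.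
Proof.
move=> G hj; case: (G) => /andP [_ Hs] _ _; have [Ha [Ax Ay]] := alt_nth Hs.
have hi : (j.*2 < size (alt xs ys))%N by rewrite Ha; lia.
rewrite /fD -(Ax j hj) (index_uniq 0%N hi (uniq_alt G)) (Ax j hj).
case: (Fc_vals G j) => h _; exact: h.
Qed.

Lemma fD_y n xs ys j : goodH n xs ys -> (j < size ys)%N ->
  fD xs ys (nth 0%N ys j) = (Fn xs ys j.+1)%:Z.
Proof.
move=> G hj; case: (G) => /andP [_ Hs] _ _; have [Ha [Ax Ay]] := alt_nth Hs.
have hi : (j.*2.+1 < size (alt xs ys))%N by rewrite Ha; lia.
rewrite /fD -(Ay j hj) (index_uniq 0%N hi (uniq_alt G)).
by case: (Fc_vals G j) => _ h; exact: h.
Qed.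


Definition stp (s : seq nat) (Z : nat -> vtx) (i : nat) : step :=
  ((if i == 1%N then VA else Z i.-1, Z i, (at1 s i)%:Z), true).

Definition vZ (Z : nat -> vtx) j := if j is 0%N then VA else Z j.

Lemma walk_pref E s Z : (forall i, (0 < i <= size s)%N -> (stp s Z i).1 \in E) ->
  forall len a, (a + len <= size s)%N ->
  walk E (vZ Z a) (map (stp s Z) (iota a.+1 len)) (vZ Z (a + len)).
Proof.
move=> HE; elim=> [|len IH] a h /=; first by rewrite addn0.
rewrite HE /=; last by lia.
apply/andP; split; first by clear; case: a => [|a] /=; rewrite eqxx.
have -> : (a + len.+1 = a.+1 + len)%N by lia.
apply: (IH a.+1); lia.
Qed.

Lemma plen_pref n s Z j : plen n (map (stp s Z) (iota 1 j)) = DD n s j.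
Proof.
rewrite /plen big_map /DD /=.
have -> : iota 1 j = index_iota 1 j.+1 by rewrite /index_iota subSS subn0.
rewrite big_add1 /=.
by apply: eq_bigr.
Qed.

Lemma last_pref (Z : nat -> vtx) j : last VA (map Z (iota 1 j)) = vZ Z j.
Proof.
case: j => [|j] //.
have -> : iota 1 j.+1 = iota 1 j ++ [:: j.+1].
  by have e := iotaD 1 j 1; rewrite addn1 add1n in e; exact: e.
by rewrite map_cat last_cat.
Qed.

Lemma sum_DD n s : \sum_(x <- s) omega n x%:Z = DD n s (size s).
Proof. by rewrite (big_nth 0%N). Qed.

Lemma dsrc (X : nat -> vtx) n (d : vtx -> wt n) s j : d VA = 0 ->
  (forall i, d (X i) = DD n s i) -> d (if j.+1 == 1%N then VA else X j) = DD n s j.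
Proof. by move=> h0 hX; case: j => [|j] /=; rewrite ?h0 ?DD_0 ?hX. Qed.

Lemma D_pot n xs ys X Y (d : vtx -> wt n) : goodH n xs ys -> d VA = 0 ->
  (forall i, d (X i) = DD n xs i) -> (forall i, d (Y i) = DD n ys i) ->
  pot_ok (Dgraph xs ys X Y) d.
Proof.
move=> G h0 hX hY; have H := good_chain G; have [Hs Hx Hy Hyx] := H.
have Hxl := chain_xlt H; have Hyl := chain_ylt H.
move=> e; rewrite /Dgraph !mem_cat.
case/orP => [/mapP [i hi ->] | /orP [/mapP [i hi ->] | /orP [/mapP [i hi ->] | /mapP [i hi ->]]]];
  rewrite mem_iota in hi; case: i hi => [|j] hi //=.
- rewrite (dsrc _ h0 hX) hX /at1 /=; split; first exact: E1f.
  apply: E1b; first by apply: Hx; lia.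
  by move=> i hij; apply: Hxl; lia.
- rewrite (dsrc _ h0 hY) hY /at1 /=; split; first exact: E1f.
  apply: E1b; first by have := Hy j ltac:(lia); lia.
  by move=> i hij; apply: Hyl; lia.
- rewrite hX hY /at1 /= (fD_y G); last by lia.
  split; [apply: E3f | apply: E3b] => //; lia.
- rewrite hX hY /at1 /= (fD_x G); last by lia.
  split; [apply: E4f | apply: E4b] => //; lia.
Qed.

Lemma Fn_lt_x n xs ys j : goodH n xs ys -> (j < size xs)%N -> (Fn xs ys j < nth 0%N xs j)%N.
Proof.
move=> G hj; have H := good_chain G; have [Hs Hx Hy Hyx] := H.
have hjq : (j <= size ys)%N by lia.
have [F1 _] := invariants H hjq.
case: j hj F1 {hjq} => [|j] hj F1 /=; first by rewrite Fn_0; have := Hx 0%N hj; lia.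
have := Hyx j hj; move: F1 => /= F1; lia.
Qed.

Lemma Fn_y n xs ys j : goodH n xs ys -> (j < size ys)%N ->
  (0 < Fn xs ys j.+1 < nth 0%N ys j)%N.
Proof.
move=> G hj; have H := good_chain G; have [Hs Hx Hy Hyx] := H.
have hjp : (j < size xs)%N by lia.
have := Fn_lt_x G hjp; have := Hy j hj; rewrite Fn_S; lia.
Qed.

Lemma stpX_mem xs ys X Y i : (0 < i <= size xs)%N -> (stp xs X i).1 \in Dgraph xs ys X Y.
Proof.
move=> hi; rewrite /Dgraph mem_cat; apply/orP; left; apply/mapP; exists i => //.
rewrite mem_iota; lia.
Qed.

Lemma stpY_mem xs ys X Y i : (0 < i <= size ys)%N -> (stp ys Y i).1 \in Dgraph xs ys X Y.
Proof.
move=> hi; rewrite /Dgraph !mem_cat; apply/orP; right; apply/orP; left; apply/mapP; exists i => //.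
rewrite mem_iota; lia.
Qed.

Lemma labels n xs ys X Y e : goodH n xs ys -> e \in Dgraph xs ys X Y -> 1 <= e.2 <= n%:Z - 1.
Proof.
move=> G; have H := good_chain G; have [Hs Hx Hy Hyx] := H.
rewrite /Dgraph !mem_cat.
case/orP => [/mapP [i hi ->] | /orP [/mapP [i hi ->] | /orP [/mapP [i hi ->] | /mapP [i hi ->]]]];
  rewrite mem_iota in hi; case: i hi => [|j] hi //=; rewrite /at1 /=.
- have := Hx j ltac:(lia); lia.
- have := Hy j ltac:(lia); lia.
- rewrite (fD_y G); last by lia.
  have := Fn_y G (_ : (j < size ys)%N) ; have := Hy j; lia.
- rewrite (fD_x G); last by lia.
  have := Fn_lt_x G (_ : (j.+1 < size xs)%N); have := Hx j.+1; lia.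
Qed.

Lemma chain_geo n xs ys X Y (s : seq nat) (Z : nat -> vtx) (d : vtx -> wt n) j :
  (0 < n)%N -> pot_ok (Dgraph xs ys X Y) d -> d VA = 0 ->
  (forall i, d (Z i) = DD n s i) ->
  (forall i, (0 < i <= size s)%N -> (stp s Z i).1 \in Dgraph xs ys X Y) ->
  (j <= size s)%N ->
  walk (Dgraph xs ys X Y) VA (map (stp s Z) (iota 1 j)) (vZ Z j) /\
  plen n (map (stp s Z) (iota 1 j)) = d (vZ Z j).
Proof.
move=> n0 Hp h0 hZ Hm hj; split.
  by have := @walk_pref _ s Z Hm j 0%N; rewrite add0n; apply.
by rewrite plen_pref; case: j {hj} => [|j] /=; rewrite ?h0 ?DD_0 ?hZ.
Qed.

Lemma concl_gen n xs ys X Y (d : vtx -> wt n) : (0 < n)%N -> goodH n xs ys -> d VA = 0 ->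
  (forall i, d (X i) = DD n xs i) -> (forall i, d (Y i) = DD n ys i) ->
  conclusions n xs ys X Y.
Proof.
move=> n0 G h0 hX hY; have H := good_chain G; have [Hs Hx Hy Hyx] := H.
have Hp := D_pot G h0 hX hY.
have CX j := @chain_geo n xs ys X Y xs X d j n0 Hp h0 hX (@stpX_mem xs ys X Y).
have CY j := @chain_geo n xs ys X Y ys Y d j n0 Hp h0 hY (@stpY_mem xs ys X Y).
split.
  move=> i /andP [h1 h2]; case: i h1 h2 => [|j] // _ hj.
  rewrite /at1 /= (fD_x G hj); have := Fn_lt_x G hj; lia.
split.
  move=> i /andP [h1 h2]; case: i h1 h2 => [|j] // _ hj.
  rewrite /at1 /= (fD_y G hj); have := Fn_y G hj; lia.
split; first by move=> e; exact: labels G.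
have [wX pX] := CX (size xs) (leqnn _).
have [wY pY] := CY (size ys) (leqnn _).
split; first by rewrite /chainend last_pref; apply: (geo_ok n0 Hp h0 wX pX).
split; first by rewrite sum_DD plen_pref; exact: wcong_refl.
split; first by rewrite /chainend last_pref; apply: (geo_ok n0 Hp h0 wY pY).
split; first by rewrite sum_DD plen_pref; exact: wcong_refl.
move=> v; rewrite inE mem_cat => /orP [/eqP -> | /orP [/mapP [i hi ->] | /mapP [i hi ->]]].
- apply: (@coh_ok n _ d VA [::] n0 Hp h0) => //.
  by rewrite /plen big_nil h0.
- rewrite mem_iota in hi; have [w p] := CX i ltac:(lia).
  case: i hi w p => [|i] // hi w p.
  exact: (coh_ok n0 Hp h0 w p).
- rewrite mem_iota in hi; have [w p] := CY i ltac:(lia).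
  case: i hi w p => [|i] // hi w p.
  exact: (coh_ok n0 Hp h0 w p).
Qed.


Lemma rs_mem n c t : t \in rs n c -> (0 < t < n)%N.
Proof. rewrite /rs mem_filter mem_iota => /andP [_ h]; lia. Qed.

Lemma ls_mem n c t : t \in ls n c -> (0 < t < n)%N.
Proof. rewrite /ls mem_filter mem_iota => /andP [_ h]; lia. Qed.

Theorem mainTheorem2 (n k : nat) (c : seq bool) :
  (0 < k < n)%N -> size c = n -> count id c = k ->
  (interlaced (rs n c) (ls n c) -> conclusions n (rs n c) (ls n c) VR VL) /\
  (interlaced (ls n c) (rs n c) -> conclusions n (ls n c) (rs n c) VL VR).
Proof.
move=> hk _ _; have n0 : (0 < n)%N by lia.
split => hI.
- apply: (@concl_gen n _ _ VR VL (fun v => match v with VA => 0 | VR i => DD n (rs n c) i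
                                   | VL i => DD n (ls n c) i end)) => //.
  by split => // t; [exact: rs_mem | exact: ls_mem].
- apply: (@concl_gen n _ _ VL VR (fun v => match v with VA => 0 | VR i => DD n (rs n c) i
                                   | VL i => DD n (ls n c) i end)) => //.
  by split => // t; [exact: ls_mem | exact: rs_mem].
Qed.
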